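(* Consider the asynchronous communication model described in the context, and suppose that $Q(y|\star)>0$ for all $y\in\mathcal Y$. Then no asynchronism exponent strictly greater than $$\max_{x\in\mathcal X}D\big(Q(\cdot|x)\,\|\,Q(\cdot|\star)\big)$$ is achievable (at any rate $R\ge 0$).
   Context: Model. A discrete memoryless channel has finite input alphabet $\mathcal X$, finite output alphabet $\mathcal Y$, transition probabilities $Q(y|x)$, and a distinguished ''noise'' input symbol $\star\in\mathcal X$. Standing assumptions: for every $y$ there is $x$ with $Q(y|x)>0$, and the synchronized capacity $C(Q)>0$. A code consists of $M\ge2$ equally likely messages, codewords $c^N(m)\in\mathcal X^N$, and a sequential decoder. The asynchronism level is an integer $A\ge1$: the start time $\nu$ is uniform on $\{1,\dots,A\}$, independent of the message. Given message $m$ and $\nu$, outputs $Y_1,Y_2,\dots$ are independent with $Y_i\sim Q(\cdot|\star)$ if $i\le\nu-1$ or $i\ge\nu+N$, and $Y_i\sim Q(\cdot|c_{i-\nu+1}(m))$ for $\nu\le i\le\nu+N-1$. The receiver knows $A$ and the code but not $\nu$. A decoder is $(\tau,\phi)$ with $\tau$ a stopping time w.r.t. $Y_1,Y_2,\dots$ and $\phi$ a function of $Y_1,\dots,Y_\tau$ returning a message. With $\mathbb P_{m,l},\mathbb E_{m,l}$ conditioning on message $m$ and $\nu=l$: $\mathbb P(\mathcal E)=\frac1{AM}\sum_{m,l}\mathbb P_{m,l}(\phi\neq m)$, $\mathbb E(\tau-\nu)^+=\frac1{AM}\sum_{m,l}\mathbb E_{m,l}(\tau-l)^+$, rate $R=\ln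 M/\mathbb E(\tau-\nu)^+$. An asynchronism exponent $\alpha$ is achievable at rate $R$ if for every $\varepsilon>0$ there is a code with (sufficiently large) blocklength $N$ operating at asynchronism level $A=e^{(\alpha-\varepsilon)N}$ with rate at least $R-\varepsilon$ and $\mathbb P(\mathcal E)\le\varepsilon$. $D$ is Kullback–Leibler divergence. *)

(* Defs.v *)
From HB Require Import structures.
From mathcomp Require Import all_boot all_order all_algebra.
From mathcomp Require Import all_classical all_reals all_analysis.
Set Implicit Arguments. Unset Strict Implicit. Unset Printing Implicit Defensive.
Import Order.TTheory GRing.Theory Num.Theory.
Local Open Scope ring_scope.
Local Open Scope classical_set_scope.

Section Async.
Context {R : realType} {X Y : finType}.

(* Q x y = Q(y|x) : a stochastic matrix *)
Definition stochastic (Q : X -> Y -> R) : Prop :=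
  forall x, (forall y, 0 <= Q x y) /\ \sum_y Q x y = 1.

Definition is_distr (P : X -> R) : Prop :=
  (forall x, 0 <= P x) /\ \sum_x P x = 1.

Definition divergence (P Q : Y -> R) : \bar R :=
  if [exists y, (0 < P y) && (Q y == 0)] then +oo%E
  else (\sum_(y | 0 < P y) P y * ln (P y / Q y))%:E.

Definition mutual_info (P : X -> R) (Q : X -> Y -> R) : R :=
  \sum_x \sum_y
    (if 0 < P x * Q x y
     then P x * Q x y * ln (Q x y / \sum_(x' : X) P x' * Q x' y)
     else 0).

Definition capacity (Q : X -> Y -> R) : R :=
  sup [set r | exists P, is_distr P /\ r = mutual_info P Q].

(* A code with M messages, blocklength N, and a sequential decoder (tau, phi):
   tau = first n >= 0 such that [stop (Y_1..Y_n)], phi = [dec (Y_1..Y_tau)].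
   Every stopping time w.r.t. the natural filtration of a finite-alphabet
   process is of this form. *)
Record code (M N : nat) := Code {
  cw : 'I_M -> 'I_N -> X ;
  stop : seq Y -> bool ;
  dec : seq Y -> 'I_M }.

(* input symbol at (1-indexed) time i when the codeword c starts at time l *)
Definition input_at (N : nat) (star : X) (c : 'I_N -> X) (l i : nat) : X :=
  if (l <= i)%N then (if @insub _ (fun k => (k < N)%N) 'I_N (i - l)%N is Some j
                      then c j else star)
  else star.

(* probability of observing Y_1..Y_n = s under message m and nu = l *)
Definition pathprob (Q : X -> Y -> R) (star : X) (M N : nat) (C : code M N)
  (m : 'I_M) (l : nat) (s : seq Y) : R :=
  \prod_(p <- zip (iota 1 (size s)) s) Q (input_at star (cw C m) l p.1) p.2.

(* [tau = size s] on the output prefix s *)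
Definition firststop (M N : nat) (C : code M N) (s : seq Y) : bool :=
  stop C s && [forall k : 'I_(size s), ~~ stop C (take k s)].

Definition p_stop Q star M N (C : code M N) (m : 'I_M) (l n : nat) : R :=
  \sum_(t : n.-tuple Y | firststop C t) pathprob Q star C m l t.

Definition p_correct Q star M N (C : code M N) (m : 'I_M) (l n : nat) : R :=
  \sum_(t : n.-tuple Y | firststop C t && (dec C t == m)) pathprob Q star C m l t.

(* P_{m,l}(phi <> m): never stopping counts as an error *)
Definition err_ml Q star M N (C : code M N) (m : 'I_M) (l : nat) : \bar R :=
  (1%:E - \sum_(0 <= n <oo) (p_correct Q star C m l n)%:E)%E.

(* E_{m,l}(tau - l)^+ ; equals +oo if P_{m,l}(tau = oo) > 0 *)
Definition delay_ml Q star M N (C : code M N) (m : 'I_M) (l : nat) : \bar R :=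
  (\sum_(0 <= n <oo) (((n - l)%N)%:R * p_stop Q star C m l n)%:E
   + (if \sum_(0 <= n <oo) (p_stop Q star C m l n)%:E == 1%:E then 0 else +oo))%E.

(* P(E) and E(tau - nu)^+ at asynchronism level A (nu uniform on {1..A}) *)
Definition Perr Q star M N (C : code M N) (A : nat) : \bar R :=
  (((A * M)%:R)^-1%:E * \sum_(m < M) \sum_(1 <= l < A.+1) err_ml Q star C m l)%E.

Definition Edelay Q star M N (C : code M N) (A : nat) : \bar R :=
  (((A * M)%:R)^-1%:E * \sum_(m < M) \sum_(1 <= l < A.+1) delay_ml Q star C m l)%E.

Definition async_level (e : R) (N : nat) : nat :=
  maxn 1 (Num.truncn (expR (e * N%:R))).

Definition achievable (Q : X -> Y -> R) (star : X) (alpha Rt : R) : Prop :=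
  forall eps : R, 0 < eps -> forall N0 : nat, exists N : nat, (N0 <= N)%N /\
    exists M : nat, exists C : code M N, (2 <= M)%N /\
      let A := async_level (alpha - eps) N in
      ((Rt - eps)%:E * Edelay Q star C A <= (ln M%:R)%:E)%E /\
      (Perr Q star C A <= eps%:E)%E.

End Async.

(* Main.v *)
Require Import Defs.
From HB Require Import structures.
From mathcomp Require Import all_boot all_order all_algebra.
From mathcomp Require Import all_classical all_reals all_analysis.
From mathcomp Require Import ring lra zify.
Import Order.TTheory GRing.Theory Num.Theory.
Local Open Scope ring_scope.
Section Gen.
Context {R : realType} {Y : finType}.

Lemma FL (L : nat) (w : nat -> Y -> R) :
  \sum_(y : L.-tuple Y) \prod_(i < L) w i (tnth y i) = \prod_(i < L) \sum_(u : Y) w i u.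
Proof.
rewrite (bigA_distr_bigA (fun i : 'I_L => fun u => w i u)) /=.
rewrite (reindex (@finfun_of_tuple _ _)) /=; last first.
  by exists (@tuple_of_finfun _ _) => t _; [exact: finfun_of_tupleK | exact: tuple_of_finfunK].
apply: eq_bigr => t _; apply: eq_bigr => i _.
by rewrite ffunE.
Qed.

Lemma nneseries_le_bound (u : nat -> \bar R) c : (forall n, (0 <= u n)%E) ->
  (forall k, (\sum_(0 <= i < k) u i <= c)%E) -> (\sum_(0 <= i <oo) u i <= c)%E.
Proof.
move=> u0 uc.
have nd := @ereal_nondecreasing_series _ u xpredT 0 (fun n _ _ => u0 n).
rewrite (cvg_lim _ (ereal_nondecreasing_cvgn nd)) //.
by apply: ub_ereal_sup => _ [k _ <-]; exact: uc.
Qed.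

End Gen.
Section Gen2.
Context {R : realType} {Y : finType}.

Lemma prod_zip_iota (g : nat -> Y -> R) (x : Y) (s : seq Y) k :
  \prod_(p <- zip (iota k (size s)) s) g p.1 p.2 = \prod_(i < size s) g (k + i)%N (nth x s i).
Proof.
elim: s k => [|a s IH] k /=; first by rewrite big_nil big_ord0.
rewrite big_cons big_ord_recl /= addn0 IH; congr (_ * _).
by apply: eq_bigr => i _; rewrite /bump /= addSnnS add1n.
Qed.

Lemma prod_if_lt (L n : nat) (a : nat -> R) : (n <= L)%N ->
  \prod_(i < L) (if (i < n)%N then a i else 1) = \prod_(i < n) a i.
Proof.
by move=> nL; rewrite [RHS](big_ord_widen _ _ nL) [RHS]big_mkcond.
Qed.

Lemma marg (x : Y) (L n : nat) (q : nat -> Y -> R) (t : seq Y) : size t = n -> (n <= L)%N ->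
  (forall i, \sum_u q i u = 1) ->
  \sum_(y : L.-tuple Y) ((take n y == t)%:R * \prod_(i<L) q i (tnth y i)) =
  \prod_(i < n) q i (nth x t i).
Proof.
move=> st nL q1.
pose w i u := q i u * (if (i < n)%N then (u == nth x t i)%:R else 1).
have E : forall y : L.-tuple Y, (take n y == t)%:R * \prod_(i<L) q i (tnth y i)
   = \prod_(i < L) w i (tnth y i).
  move=> y; rewrite /w big_split /= mulrC; congr (_ * _).
  have [e|ne] := eqVneq (take n y) t.
    rewrite big1 // => i _; case: ifP => // lt.
    by rewrite -e (tnth_nth x) nth_take // eqxx.
  have sz : size (take n y) = size t by rewrite size_takel ?size_tuple // st.
  have [i [lti neq]] : exists i, (i < n)%N /\ nth x (take n y) i != nth x t i.
    apply/not_existsP => H; move/eqP: ne; apply; apply: (eq_from_nth (x0:=x) sz) => i.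
    rewrite sz st => lti; apply/eqP; apply: contraT => nq; case: (H i); split => //.
  have iL : (i < L)%N by apply: leq_trans nL.
  rewrite (bigD1 (Ordinal iL)) //= lti (tnth_nth x) /= -(nth_take _ lti) (negbTE neq).
  by rewrite mul0r.
rewrite (eq_bigr _ (fun y _ => E y)) FL.
have -> : \prod_(i < L) \sum_u w i u = \prod_(i < L) (if (i < n)%N then q i (nth x t i) else 1).
  apply: eq_bigr => i _; rewrite /w; case: ifP => lt.
    rewrite (bigD1 (nth x t i)) //= eqxx mulr1 big1 ?addr0 // => u /negbTE ->.
    by rewrite mulr0.
  by under eq_bigr do rewrite mulr1; rewrite q1.
exact: (@prod_if_lt L n (fun i => q i (nth x t i)) nL).
Qed.


Lemma prod_delta L (i : 'I_L) (f : Y -> R) (y : L.-tuple Y) :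
  \prod_(k < L) (if (k == i :> nat) then f (tnth y k) else 1) = f (tnth y i).
Proof.
rewrite (bigD1 i) //= eqxx big1 ?mulr1 // => k ki.
by rewrite ifF //; apply/negbTE; rewrite val_eqE.
Qed.

Lemma Eone L (q : nat -> Y -> R) (h : Y -> R) (j : 'I_L) : (forall i, \sum_u q i u = 1) ->
  \sum_(y : L.-tuple Y) (\prod_(k < L) q k (tnth y k)) * h (tnth y j) = \sum_u q j u * h u.
Proof.
move=> q1.
under eq_bigr => y _ do rewrite -(prod_delta _ j h y) -big_split /=.
rewrite (FL _ (fun k u => q k u * (if (k == j :> nat) then h u else 1))) (bigD1 j) //= eqxx /=.
rewrite [X in _ * X]big1 ?mulr1 // => k kj.
have -> : (k == j :> nat) = false by apply/negbTE; rewrite val_eqE.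
by under eq_bigr do rewrite mulr1; exact: q1.
Qed.

Lemma Epair L (q : nat -> Y -> R) (h h' : Y -> R) (i j : 'I_L) : (forall i, \sum_u q i u = 1) ->
  i != j ->
  \sum_(y : L.-tuple Y) (\prod_(k < L) q k (tnth y k)) * (h (tnth y i) * h' (tnth y j)) =
  (\sum_u q i u * h u) * (\sum_u q j u * h' u).
Proof.
move=> q1 ij.
under eq_bigr => y _ do rewrite -(prod_delta _ i h y) -(prod_delta _ j h' y) -!big_split /=.
rewrite (FL _ (fun k u => q k u * ((if (k == i :> nat) then h u else 1) *
   (if (k == j :> nat) then h' u else 1)))) (bigD1 i) //= (bigD1 j) /=; last by rewrite eq_sym ij.
have -> : (i == j :> nat) = false by apply/negbTE; rewrite val_eqE.
have -> : (j == i :> nat) = false by apply/negbTE; rewrite val_eqE eq_sym.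
rewrite !eqxx /= [X in _ * (_ * X)]big1 ?mulr1.
  by under eq_bigr do rewrite mulr1; under [X in _ * X]eq_bigr do rewrite mul1r.
move=> k /andP[ki kj].
have -> : (k == j :> nat) = false by apply/negbTE; rewrite val_eqE.
have -> : (k == i :> nat) = false by apply/negbTE; rewrite val_eqE.
by under eq_bigr do rewrite mulr1 mulr1; exact: q1.
Qed.

Lemma ln_prod L (f : 'I_L -> R) : (forall i, 0 < f i) ->
  ln (\prod_(i < L) f i) = \sum_(i < L) ln (f i).
Proof.
elim: L f => [|L IH] f fp; first by rewrite !big_ord0 ln1.
rewrite !big_ord_recr /= lnM.
- by rewrite IH // => i; exact: fp.
- by rewrite posrE; apply: prodr_gt0 => i _; exact: fp.
- by rewrite posrE; exact: fp.
Qed.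

End Gen2.
Section Main.
Variables (R : realType) (X Y : finType) (Q : X -> Y -> R) (star : X).
Hypothesis HQ : stochastic Q.
Hypothesis Hstar : forall y, 0 < Q star y.
Variable y0 : Y.
Variables (M N : nat) (C : @Defs.code X Y M N).

Definition inp (m : ordinal M) (l : nat) (i : nat) := input_at star (cw C m) l i.+1.
Definition Pml {L} m l (y : L.-tuple Y) := \prod_(i<L) Q (inp m l i) (tnth y i).
Definition cond (m : ordinal M) (s : seq Y) := firststop C s && (dec C s == m).
Definition gm {L} m (y : L.-tuple Y) : R := \sum_(n < L.+1) (cond m (take n y))%:R.

Lemma sum_tuple_eq n (f : seq Y -> R) (s : seq Y) : size s = n ->
  \sum_(t : n.-tuple Y) f t * (s == val t)%:R = f s.
Proof.
move=> sz; have szb : size s == n by apply/eqP.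
rewrite (bigD1 (Tuple szb)) //= eqxx mulr1 big1 ?addr0 // => t nt.
case: eqP => [e|]; last by rewrite mulr0.
by case/eqP: nt; apply: val_inj; rewrite /= e.
Qed.

Lemma pathprob_marg L m l n (t : n.-tuple Y) : (n <= L)%N ->
  pathprob Q star C m l t = \sum_(y : L.-tuple Y) (take n y == t)%:R * Pml m l y.
Proof.
move=> nL; rewrite /Pml (@marg R Y y0 L n (fun i u => Q (inp m l i) u)) ?size_tuple //.
  rewrite /pathprob (prod_zip_iota (fun i u => Q (input_at star (cw C m) l i) u) y0).
  rewrite size_tuple; apply: eq_bigr => i _; by rewrite add1n.
by move=> i; case: (HQ (inp m l i)).
Qed.

Lemma F1 L m l : \sum_(n < L.+1) p_correct Q star C m l n = \sum_(y : L.-tuple Y) Pml m l y * gm m y.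
Proof.
rewrite /p_correct.
transitivity (\sum_(n < L.+1) \sum_(y : L.-tuple Y) Pml m l y * \sum_(t : n.-tuple Y)
   (cond m t)%:R * (take n y == t)%:R).
  apply: eq_bigr => n _; rewrite big_mkcond /=.
  under eq_bigr => t _ do rewrite (@pathprob_marg L m l n t (ltn_ord n : (n <= L)%N)).
  transitivity (\sum_(t : n.-tuple Y) \sum_(y : L.-tuple Y) (cond m t)%:R * ((take n y == t)%:R * Pml m l y)).
    apply: eq_bigr => t _; rewrite -mulr_sumr /cond; case: ifP => _; by rewrite ?mul1r ?mul0r.
  rewrite exchange_big /=; apply: eq_bigr => y _; rewrite mulr_sumr; apply: eq_bigr => t _; ring.
rewrite exchange_big /=; apply: eq_bigr => y _; rewrite /gm mulr_sumr.
apply: eq_bigr => n _; congr (_ * _).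
have := (@sum_tuple_eq (nat_of_ord n) (fun s => (cond m s)%:R) (take n y)).
move=> H; rewrite H //; rewrite size_takel // size_tuple -ltnS; exact: ltn_ord.
Qed.

Lemma fs_uniq L (y : L.-tuple Y) (n n' : nat) : (n <= L)%N -> (n' <= L)%N ->
  firststop C (take n y) -> firststop C (take n' y) -> n = n'.
Proof.
wlog lt : n n' / (n <= n')%N.
  move=> H nL n'L f f'; case: (leqP n n') => [le|lt]; first exact: H.
  by apply/esym/H => //; exact: ltnW.
move=> nL n'L /andP[s _] /andP[_ /forallP fa].
apply/eqP; rewrite eqn_leq lt /=; apply: contraT; rewrite -ltnNge => ltn.
have sz : (n < size (take n' y))%N by rewrite size_takel ?size_tuple.
by move: (fa (Ordinal sz)) => /=; rewrite take_takel ?s // ltnW.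
Qed.

Lemma gm_ge0 L m y : 0 <= @gm L m y.
Proof. by apply: sumr_ge0 => n _; rewrite ler0n. Qed.

Lemma F2 L (y : L.-tuple Y) : \sum_(m < M) gm m y <= 1.
Proof.
rewrite /gm exchange_big /=.
have E : forall n : ordinal L.+1, \sum_(m < M) (cond m (take n y))%:R = (firststop C (take n y))%:R :> R.
  move=> n; rewrite /cond; case: (firststop C _) => /=; last by rewrite big1.
  by rewrite (bigD1 (dec C (take n y))) //= eqxx big1 ?addr0 // => i /negbTE; rewrite eq_sym => ->.
under eq_bigr => n _ do rewrite E.
case: (pickP (fun n : ordinal L.+1 => firststop C (take n y))) => [n0 f0|none]; last first.
  by rewrite big1 // => n _; rewrite none.
rewrite (bigD1 n0) //= f0 big1 ?addr0 // => n nn0.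
case fn: (firststop C (take n y)) => //; case/eqP: nn0; apply: val_inj.
by apply: (@fs_uniq L y) => //; [exact: (ltn_ord n) | exact: (ltn_ord n0)].
Qed.


Definition Pst {L} (y : L.-tuple Y) := \prod_(i<L) Q star (tnth y i).
Definition rt m l i u := Q (inp m l i) u / Q star u.
Definition Lr {L} m l (y : L.-tuple Y) := \prod_(i<L) rt m l i (tnth y i).

Lemma Q_ge0 x u : 0 <= Q x u. Proof. by case: (HQ x) => h _; exact: h. Qed.
Lemma Q1 x : \sum_u Q x u = 1. Proof. by case: (HQ x). Qed.
Lemma Qst_neq0 u : Q star u != 0. Proof. exact: lt0r_neq0 (Hstar u). Qed.
Lemma rt_ge0 m l i u : 0 <= rt m l i u.
Proof. by rewrite /rt divr_ge0 ?Q_ge0 // ltW. Qed.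
Lemma Pst_ge0 L (y : L.-tuple Y) : 0 <= Pst y.
Proof. by apply: prodr_ge0 => i _; exact: Q_ge0. Qed.
Lemma Lr_ge0 L m l (y : L.-tuple Y) : 0 <= Lr m l y.
Proof. by apply: prodr_ge0 => i _; exact: rt_ge0. Qed.
Lemma Pml_ge0 L m l (y : L.-tuple Y) : 0 <= Pml m l y.
Proof. by apply: prodr_ge0 => i _; exact: Q_ge0. Qed.

Lemma F3 L m l (y : L.-tuple Y) : Pst y * Lr m l y = Pml m l y.
Proof.
rewrite /Pst /Lr /Pml -big_split; apply: eq_bigr => i _ /=.
by rewrite /rt mulrC divfK // Qst_neq0.
Qed.

Lemma Pst_sum L : \sum_(y : L.-tuple Y) Pst y = 1.
Proof. by rewrite /Pst (FL _ (fun _ u => Q star u)) big1 // => i _; exact: Q1. Qed.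

Lemma Pml_sum L m l : \sum_(y : L.-tuple Y) Pml m l y = 1.
Proof. by rewrite /Pml (FL _ (fun i u => Q (inp m l i) u)) big1 // => i _; exact: Q1. Qed.

Lemma ELr L m l : \sum_(y : L.-tuple Y) Pst y * Lr m l y = 1.
Proof. by under eq_bigr do rewrite F3; exact: Pml_sum. Qed.

Lemma ELL L m l m' l' : (forall i, inp m l i = star \/ inp m' l' i = star) ->
   \sum_(y : L.-tuple Y) Pst y * (Lr m l y * Lr m' l' y) = 1.
Proof.
move=> H.
have E y : Pst y * (Lr m l y * Lr m' l' y) = \prod_(i<L) (Q star (tnth y i) *
   (rt m l i (tnth y i) * rt m' l' i (tnth y i))) by rewrite /Pst /Lr -!big_split.
rewrite (eq_bigr _ (fun y _ => E y)) (FL _ (fun i u => Q star u * (rt m l i u * rt m' l' i u))) big1 // => i _.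
case: (H i) => e.
  under eq_bigr => u _ do rewrite {1}/rt e divff ?Qst_neq0 // mul1r /rt mulrC divfK ?Qst_neq0 //.
  exact: Q1.
under eq_bigr => u _ do rewrite [rt m' l' _ _]/rt e divff ?Qst_neq0 // mulr1 /rt mulrC divfK ?Qst_neq0 //.
exact: Q1.
Qed.

Lemma inp_window m l i : inp m l i != star -> (l <= i.+1)%N && (i.+1 < l + N)%N.
Proof.
rewrite /inp /input_at; case: (leqP l i.+1) => li; last by rewrite eqxx.
case: insubP => [j lt _ _ | _]; last by rewrite eqxx.
rewrite /=; lia.
Qed.

Definition ov l l' := ((l < l' + N) && (l' < l + N))%N.

Lemma disj m l l' : ~~ ov l l' -> forall i, inp m l i = star \/ inp m l' i = star.
Proof.
move=> nov i; case: (eqVneq (inp m l i) star) => [->|h1]; first by left.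
case: (eqVneq (inp m l' i) star) => [->|h2]; first by right.
exfalso; move: (inp_window _ _ _ h1) (inp_window _ _ _ h2) nov => /andP[a b] /andP[c d].
rewrite /ov; case/nandP; lia.
Qed.

Lemma count_window (P : pred nat) a w s : uniq s -> (forall x, P x -> (a <= x < a + w)%N) ->
  (count P s <= w)%N.
Proof.
move=> us H; rewrite -size_filter.
rewrite -[w in (_ <= w)%N](size_iota a); apply: uniq_leq_size; first exact: filter_uniq.
by move=> x; rewrite mem_filter mem_iota => /andP[/H].
Qed.

Lemma sum_count (P : pred nat) s : \sum_(i <- s) (P i)%:R = (count P s)%:R :> R.
Proof.
elim: s => [|a s IH]; first by rewrite big_nil.
by rewrite big_cons IH /= natrD.
Qed.

Lemma ov_count l A : \sum_(1 <= l' < A.+1) (ov l l')%:R <= (2 * N)%:R :> R.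
Proof.
rewrite sum_count ler_nat; apply: (@count_window _ (l - N)).
  by rewrite /index_iota iota_uniq.
move=> x; rewrite /ov => /andP[a b]; apply/andP; split; lia.
Qed.

Lemma pw (T A tau g : R) : 0 < A -> 0 < tau -> 0 <= g -> g <= 1 -> 0 <= T ->
  T * g <= A * (1 + tau) * g + (T - A) ^+ 2 / (A * tau).
Proof.
move=> A0 t0 g0 g1 T0.
have Ag : 0 <= A * tau * g by rewrite !mulr_ge0 // ltW.
case: (lerP T (A * (1 + tau))) => h.
  have : T * g <= A * (1 + tau) * g by rewrite ler_wpM2r.
  have : 0 <= (T - A) ^+ 2 / (A * tau) by rewrite divr_ge0 ?sqr_ge0 // ltW ?mulr_gt0.
  lra.
have h' : A * tau < T - A by move: h; rewrite mulrDr mulr1; lra.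
have At : 0 < A * tau by rewrite mulr_gt0.
have h1 : T - A <= (T - A) ^+ 2 / (A * tau).
  rewrite ler_pdivlMr ?mulr_gt0 // expr2.
  apply: ler_wpM2l; lra.
have : 0 <= (T - A) * (1 - g) by rewrite mulr_ge0 //; lra.
nra.
Qed.


Section K.
Variables (L A : nat) (m : 'I_M) (B tau : R).
Hypotheses (A1 : (1 <= A)%N) (B0 : 0 <= B) (t0 : 0 < tau).

Definition Xl l (y : L.-tuple Y) := Lr m l y * ((Lr m l y <= B)%R)%:R.
Definition bl l := \sum_(y : L.-tuple Y) Pml m l y * ((B < Lr m l y)%R)%:R.

Lemma Xl_ge0 l y : 0 <= Xl l y.
Proof. by rewrite /Xl mulr_ge0 ?Lr_ge0 ?ler0n. Qed.
Lemma Xl_leB l y : Xl l y <= B.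
Proof. by rewrite /Xl; case: (lerP (Lr m l y) B) => h; rewrite ?mulr1 ?mulr0. Qed.
Lemma Xl_le l y : Xl l y <= Lr m l y.
Proof. by rewrite /Xl; case: (lerP (Lr m l y) B) => h; rewrite ?mulr1 ?mulr0 ?Lr_ge0. Qed.
Lemma bl_ge0 l : 0 <= bl l.
Proof. by apply: sumr_ge0 => y _; rewrite mulr_ge0 ?Pml_ge0 ?ler0n. Qed.

Lemma split_ind l y : Lr m l y = Xl l y + Lr m l y * ((B < Lr m l y)%R)%:R.
Proof. by rewrite /Xl; case: (lerP (Lr m l y) B) => h; rewrite ?mulr1 ?mulr0 ?addr0 ?add0r. Qed.

Lemma EXl l : \sum_(y : L.-tuple Y) Pst y * Xl l y = 1 - bl l.
Proof.
rewrite -(ELr L m l) /bl -sumrB; apply: eq_bigr => y _.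
rewrite -F3 -mulrA -mulrBr; congr (_ * _).
by rewrite {1}(split_ind l y) addrK.
Qed.

Lemma EXX l l' : \sum_(y : L.-tuple Y) Pst y * (Xl l y * Xl l' y) <= 1 + B * (ov l l')%:R.
Proof.
case ovl: (ov l l').
  apply: (@le_trans _ _ (\sum_(y : L.-tuple Y) Pst y * (B * Lr m l' y))).
    apply: ler_sum => y _; apply: ler_wpM2l; first exact: Pst_ge0.
    by apply: ler_pM; rewrite ?Xl_ge0 ?Xl_leB ?Xl_le.
  under eq_bigr do rewrite mulrCA.
  by rewrite -mulr_sumr ELr mulr1; lra.
apply: (@le_trans _ _ (\sum_(y : L.-tuple Y) Pst y * (Lr m l y * Lr m l' y))).
  apply: ler_sum => y _; apply: ler_wpM2l; first exact: Pst_ge0.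
  by apply: ler_pM; rewrite ?Xl_ge0 ?Xl_le.
rewrite ELL ?mulr0 ?addr0 //.
by apply: disj; rewrite ovl.
Qed.


Definition Tl (y : L.-tuple Y) := \sum_(1 <= l < A.+1) Xl l y.
Definition Ul (y : L.-tuple Y) := \sum_(1 <= l < A.+1) Lr m l y * ((B < Lr m l y)%R)%:R.
Definition sb := \sum_(1 <= l < A.+1) bl l.

Lemma sum_const_A (c : R) : \sum_(1 <= l < A.+1) c = A%:R * c.
Proof. by rewrite sumr_const_nat subSS subn0 mulr_natl. Qed.

Lemma ET : \sum_(y : L.-tuple Y) Pst y * Tl y = A%:R - sb.
Proof.
rewrite /Tl; under eq_bigr do rewrite mulr_sumr.
rewrite exchange_big /=; under eq_bigr do rewrite EXl.
by rewrite sumrB sum_const_A mulr1.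
Qed.

Lemma EU : \sum_(y : L.-tuple Y) Pst y * Ul y = sb.
Proof.
rewrite /Ul; under eq_bigr do rewrite mulr_sumr.
rewrite exchange_big /=; apply: eq_bigr => l _; rewrite /bl.
by apply: eq_bigr => y _; rewrite mulrA F3.
Qed.

Lemma ET2 : \sum_(y : L.-tuple Y) Pst y * Tl y ^+ 2 <= A%:R * (A%:R + B * (2 * N)%:R).
Proof.
have E y : Pst y * Tl y ^+ 2 = \sum_(1 <= l < A.+1) \sum_(1 <= l' < A.+1) Pst y * (Xl l y * Xl l' y).
  rewrite /Tl expr2 mulr_suml mulr_sumr; apply: eq_bigr => l _.
  by rewrite mulr_sumr mulr_sumr; apply: eq_bigr => l' _.
rewrite (eq_bigr _ (fun y _ => E y)) exchange_big /=.
rewrite -sum_const_A; apply: ler_sum => l _.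
rewrite exchange_big /=.
apply: (@le_trans _ _ (\sum_(1 <= l' < A.+1) (1 + B * (ov l l')%:R))).
  by apply: ler_sum => l' _; exact: EXX.
rewrite big_split /= sum_const_A mulr1 -mulr_sumr lerD2l.
by apply: ler_wpM2l => //; exact: ov_count.
Qed.

Lemma ETA : \sum_(y : L.-tuple Y) Pst y * (Tl y - A%:R) ^+ 2 <= A%:R * (B * (2 * N)%:R) + 2 * A%:R * sb.
Proof.
have E y : Pst y * (Tl y - A%:R) ^+ 2 = Pst y * Tl y ^+ 2 - 2 * A%:R * (Pst y * Tl y) + A%:R ^+ 2 * Pst y.
  by ring.
rewrite (eq_bigr _ (fun y _ => E y)) big_split sumrB /= -mulr_sumr -mulr_sumr Pst_sum ET.
have := ET2; nra.
Qed.

Section G.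
Variable g : L.-tuple Y -> R.
Hypotheses (g0 : forall y, 0 <= g y) (g1 : forall y, g y <= 1).

Lemma Kbound : \sum_(1 <= l < A.+1) \sum_(y : L.-tuple Y) Pml m l y * g y <=
  A%:R * (1 + tau) * \sum_(y : L.-tuple Y) Pst y * g y + sb
  + (B * (2 * N)%:R + 2 * sb) / tau.
Proof.
have A0 : 0 < A%:R :> R by rewrite ltr0n.
rewrite exchange_big /=.
have E y : \sum_(1 <= l < A.+1) Pml m l y * g y = Pst y * ((Tl y + Ul y) * g y).
  rewrite /Tl /Ul -big_split /= mulr_suml mulr_sumr; apply: eq_bigr => l _.
  by rewrite -split_ind -F3 mulrA.
rewrite (eq_bigr _ (fun y _ => E y)).
have P y : Pst y * ((Tl y + Ul y) * g y) <= A%:R * (1 + tau) * (Pst y * g y) +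
    (Pst y * (Tl y - A%:R) ^+ 2) / (A%:R * tau) + Pst y * Ul y.
  have T0 : 0 <= Tl y by apply: sumr_ge0 => l _; exact: Xl_ge0.
  have U0 : 0 <= Ul y.
    by apply: sumr_ge0 => l _; rewrite mulr_ge0 ?Lr_ge0 ?ler0n.
  have := @pw (Tl y) A%:R tau (g y) A0 t0 (g0 y) (g1 y) T0.
  have Ug : Ul y * g y <= Ul y by rewrite ler_piMr.
  have Ps := @Pst_ge0 L y.
  move=> h.
  have h2 : (Tl y + Ul y) * g y <= A%:R * (1 + tau) * g y + (Tl y - A%:R) ^+ 2 / (A%:R * tau) + Ul y.
    by rewrite mulrDl; lra.
  have h3 := ler_wpM2l Ps h2; apply: (le_trans h3).
  have -> : Pst y * (A%:R * (1 + tau) * g y + (Tl y - A%:R) ^+ 2 / (A%:R * tau) + Ul y) =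
    A%:R * (1 + tau) * (Pst y * g y) + Pst y * (Tl y - A%:R) ^+ 2 / (A%:R * tau) + Pst y * Ul y by ring.
  by [].
apply: (le_trans (ler_sum _ (fun y _ => P y))).
rewrite !big_split /= -!mulr_sumr -mulr_suml EU.
have := ETA.
have At : 0 < A%:R * tau by rewrite mulr_gt0.
move=> h.
have : (\sum_y Pst y * (Tl y - A%:R) ^+ 2) / (A%:R * tau) <= (B * (2 * N)%:R + 2 * sb) / tau.
  rewrite ler_pdivrMr //.
  have -> : (B * (2 * N)%:R + 2 * sb) / tau * (A%:R * tau) = A%:R * (B * (2 * N)%:R) + 2 * A%:R * sb.
    by field; exact: lt0r_neq0.
  exact: h.
lra.
Qed.

End G.

End K.


Definition dv x := \sum_u Q x u * ln (Q x u / Q star u).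
Definition vv x := \sum_u Q x u * ln (Q x u / Q star u) ^+ 2.

Lemma dv_star : dv star = 0.
Proof. by rewrite /dv big1 // => u _; rewrite divff ?Qst_neq0 // ln1 mulr0. Qed.

Section Cheb.
Variables (L : nat) (m : 'I_M) (l : nat) (Dm dl V : R).
Hypotheses (HD : forall x, dv x <= Dm) (D0 : 0 <= Dm) (dl0 : 0 < dl) (N0 : (0 < N)%N)
  (HV : forall x, vv x <= V).

Definition Bc := expR (N%:R * (Dm + dl)).
Definition Wf (y : L.-tuple Y) := \sum_(i < L) (ln (rt m l i (tnth y i)) - dv (inp m l i)).

Lemma count_inp (c : R) : 0 <= c ->
  \sum_(i < L) c * (inp m l i != star)%:R <= c * N%:R.
Proof.
move=> c0; rewrite -mulr_sumr; apply: ler_wpM2l => //.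
rewrite -(big_mkord xpredT (fun i => (inp m l i != star)%:R)) sum_count ler_nat.
apply: (@count_window _ l.-1); first by rewrite /index_iota iota_uniq.
move=> x /inp_window /andP[a b]; apply/andP; split; lia.
Qed.

Lemma sum_d : \sum_(i < L) dv (inp m l i) <= Dm * N%:R.
Proof.
apply: (le_trans _ (count_inp Dm D0)); apply: ler_sum => i _.
case: eqP => [->|_]; first by rewrite dv_star mulr0.
by rewrite mulr1.
Qed.

Lemma ind_le (y : L.-tuple Y) : ((Bc < Lr m l y)%R)%:R <= Wf y ^+ 2 / (N%:R * dl) ^+ 2.
Proof.
have Nd : 0 < N%:R * dl by rewrite mulr_gt0 // ltr0n.
case: (ltrP Bc (Lr m l y)) => h; last by rewrite divr_ge0 ?sqr_ge0.
have pos : forall i : 'I_L, 0 < rt m l i (tnth y i).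
  move=> i; rewrite lt0r rt_ge0 andbT; apply: contraTneq h => e.
  by rewrite -leNgt /Lr (bigD1 i) //= e mul0r ltW // expR_gt0.
have hl : N%:R * (Dm + dl) < ln (Lr m l y).
  rewrite -[X in X < _]expRK ltr_ln ?posrE ?expR_gt0 //.
  exact: lt_trans (expR_gt0 _) h.
have EW : Wf y = ln (Lr m l y) - \sum_(i < L) dv (inp m l i).
  by rewrite /Wf sumrB /Lr ln_prod.
have := sum_d.
move=> sd.
have Wg : N%:R * dl < Wf y by rewrite EW; nra.
rewrite ler_pdivlMr ?exprn_gt0 // mul1r.
nra.
Qed.

Lemma EW2 : \sum_(y : L.-tuple Y) Pml m l y * Wf y ^+ 2 <= V * N%:R.
Proof.
pose g i u := ln (rt m l i u) - dv (inp m l i).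
have q1 : forall i, \sum_u Q (inp m l i) u = 1 by move=> i; exact: Q1.
have mean0 : forall i, \sum_u Q (inp m l i) u * g i u = 0.
  move=> i; rewrite /g; under eq_bigr do rewrite mulrBr.
  by rewrite sumrB -mulr_suml q1 mul1r /dv subrr.
have E y : Pml m l y * Wf y ^+ 2 = \sum_(i < L) \sum_(j < L)
    Pml m l y * (g i (tnth y i) * g j (tnth y j)).
  rewrite /Wf expr2 mulr_suml mulr_sumr; apply: eq_bigr => i _.
  by rewrite mulr_sumr mulr_sumr.
rewrite (eq_bigr _ (fun y _ => E y)) exchange_big /=.
have V0 : 0 <= V by apply: le_trans (HV star); apply: sumr_ge0 => u _; rewrite mulr_ge0 ?sqr_ge0 ?Q_ge0.
apply: (le_trans _ (count_inp V V0)); apply: ler_sum => i _.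
rewrite exchange_big /= (bigD1 i) //= [X in _ + X]big1 ?addr0; last first.
  move=> j ji; rewrite /Pml.
  rewrite (@Epair R Y L (fun k u => Q (inp m l k) u) (g i) (g j) i j q1); last by rewrite eq_sym.
  by rewrite mean0 mul0r.
rewrite /Pml.
have -> : \sum_(y : L.-tuple Y) (\prod_(i0 < L) Q (inp m l i0) (tnth y i0)) * (g i (tnth y i) * g i (tnth y i))
   = \sum_u Q (inp m l i) u * (g i u * g i u).
  exact: (@Eone R Y L (fun k u => Q (inp m l k) u) (fun u => g i u * g i u) i q1).
case: eqP => [e|_].
  rewrite mulr0 big1 // => u _; rewrite /g /rt e divff ?Qst_neq0 // ln1 dv_star subrr.
  by rewrite !mulr0.
rewrite mulr1; apply: le_trans (HV (inp m l i)); rewrite /vv.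
have -> : \sum_u Q (inp m l i) u * (g i u * g i u) =
   \sum_u Q (inp m l i) u * ln (Q (inp m l i) u / Q star u) ^+ 2 - dv (inp m l i) ^+ 2.
  transitivity (\sum_u (Q (inp m l i) u * ln (Q (inp m l i) u / Q star u) ^+ 2
     - 2 * dv (inp m l i) * (Q (inp m l i) u * ln (Q (inp m l i) u / Q star u))
     + dv (inp m l i) ^+ 2 * Q (inp m l i) u)).
    by apply: eq_bigr => u _; rewrite /g /rt; ring.
  rewrite big_split sumrB /= -!mulr_sumr -/(dv (inp m l i)) q1; ring.
by rewrite lerBlDr lerDl sqr_ge0.
Qed.

Lemma bl_cheb (A : nat) (tau : R) : bl L m Bc l <= V * N%:R / (N%:R * dl) ^+ 2.
Proof.
rewrite /bl.
apply: (@le_trans _ _ (\sum_(y : L.-tuple Y) Pml m l y * (Wf y ^+ 2 / (N%:R * dl) ^+ 2))).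
  apply: ler_sum => y _; apply: ler_wpM2l; [exact: Pml_ge0 | exact: ind_le].
under eq_bigr do rewrite mulrA.
rewrite -mulr_suml ler_wpM2r ?invr_ge0 ?sqr_ge0 //.
exact: EW2.
Qed.

End Cheb.


Lemma gm_le1 L m (y : L.-tuple Y) : gm m y <= 1.
Proof.
apply: (le_trans _ (F2 L y)); rewrite (bigD1 m) //= lerDl.
by apply: sumr_ge0 => i _; exact: gm_ge0.
Qed.

Lemma partial_le1 L m l : \sum_(n < L.+1) p_correct Q star C m l n <= 1.
Proof.
rewrite F1 -(Pml_sum L m l); apply: ler_sum => y _.
by rewrite ler_piMr ?Pml_ge0 ?gm_le1.
Qed.

Lemma p_correct_ge0 m l n : 0 <= p_correct Q star C m l n.
Proof.
apply: sumr_ge0 => t _; rewrite /pathprob.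
by apply: prodr_ge0 => p _; exact: Q_ge0.
Qed.

Lemma main_bound (A L : nat) (Dm dl V : R) : (1 <= A)%N -> (2 <= M)%N ->
  (forall x, dv x <= Dm) -> 0 <= Dm -> 0 < dl -> (0 < N)%N -> (forall x, vv x <= V) ->
  \sum_(m < M) \sum_(1 <= l < A.+1) \sum_(n < L.+1) p_correct Q star C m l n <=
  A%:R * M%:R * (5/8 + 9 * (V * N%:R / (N%:R * dl) ^+ 2) + 8 * N%:R * Bc Dm dl / A%:R).
Proof.
move=> A1 M2 HD D0 dl0 N0 HV.
set beta := V * N%:R / (N%:R * dl) ^+ 2.
set B := Bc Dm dl.
have B0 : 0 <= B by rewrite /B /Bc ltW ?expR_gt0.
have A0 : 0 < A%:R :> R by rewrite ltr0n.
have M0 : 0 < M%:R :> R by rewrite ltr0n; lia.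
have t0 : 0 < 1 / 4 :> R by [].
have Km : forall m, \sum_(1 <= l < A.+1) \sum_(n < L.+1) p_correct Q star C m l n <=
    A%:R * (5 / 4) * \sum_(y : L.-tuple Y) Pst y * gm m y + 9 * (A%:R * beta) + 8 * N%:R * B.
  move=> m.
  under eq_bigr do rewrite F1.
  apply: (le_trans (@Kbound L A m B (1/4) A1 B0 t0 (gm m) (@gm_ge0 L m) (@gm_le1 L m))).
  have sb0 : 0 <= sb L A m B by apply: sumr_ge0 => l _; exact: bl_ge0.
  have sbb : sb L A m B <= A%:R * beta.
    rewrite /sb -sum_const_A; apply: ler_sum => l _.
    exact: (@bl_cheb L m l Dm dl V HD D0 dl0 N0 HV 0%N 0).
  have -> : (B * (2 * N)%:R + 2 * sb L A m B) / (1 / 4) = 8 * N%:R * B + 8 * sb L A m B.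
    by rewrite natrM; field.
  have -> : A%:R * (1 + 1 / 4) = A%:R * (5 / 4) :> R by congr (_ * _); field.
  lra.
apply: (le_trans (ler_sum _ (fun m _ => Km m))).
rewrite big_split big_split /= -mulr_sumr !sumr_const card_ord.
have Eg : \sum_(i < M) \sum_(y : L.-tuple Y) Pst y * gm i y <= 1.
  rewrite exchange_big /= -(Pst_sum L); apply: ler_sum => y _.
  by rewrite -mulr_sumr ler_piMr ?Pst_ge0 ?F2.
have M2' : 2 <= M%:R :> R by rewrite (ler_nat R 2 M).
have h1 : A%:R * (5 / 4) * \sum_(i < M) \sum_(y : L.-tuple Y) Pst y * gm i y <= A%:R * M%:R * (5 / 8).
  apply: (@le_trans _ _ (A%:R * (5 / 4) * 1)).
    by rewrite ler_wpM2l // mulr_ge0 // ltW.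
  rewrite mulr1 -mulrA ler_pM2l //; lra.
rewrite -[9 * _ *+ M]mulr_natr -[8 * _ * _ *+ M]mulr_natr.
have : A%:R * M%:R * (5 / 8 + 9 * beta + 8 * N%:R * B / A%:R) =
  A%:R * M%:R * (5 / 8) + 9 * (A%:R * beta) * M%:R + 8 * N%:R * B * M%:R.
  by field; exact: lt0r_neq0.
move=> ->; rewrite !lerD2r; exact: h1.
Qed.

End Main.
Section Asym.
Context {R : realType}.

Lemma asym (Dm a dl V : R) (N A : nat) : 0 < dl -> 0 <= V -> Dm + 3 * dl <= a ->
  (1 <= N)%N -> (1 <= A)%N -> expR (a * N%:R) < 2 * A%:R ->
  8 * (9 * V + 16) < N%:R * dl ^+ 2 ->
  9 * (V * N%:R / (N%:R * dl) ^+ 2) + 8 * N%:R * expR (N%:R * (Dm + dl)) / A%:R <= 1 / 8.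
Proof.
move=> dl0 V0 ha N1 A1 hE hN.
set u := N%:R.
have u1 : 1 <= u by rewrite /u (ler_nat R 1 N).
have u0 : 0 < u by lra.
have A0 : 0 < A%:R :> R by rewrite ltr0n.
set e1 := expR (u * dl).
have e1g : u * dl <= e1 by apply: le_trans (expR_ge1Dx _); lra.
have ud0 : 0 < u * dl by rewrite mulr_gt0.
have e1sq : (u * dl) ^+ 2 <= e1 ^+ 2 by rewrite ler_pXn2r // ?nnegrE ltW // (lt_le_trans ud0).
set B := expR (u * (Dm + dl)).
have hB : B * e1 ^+ 2 <= expR (a * u).
  rewrite /B /e1 expr2 -!expRD ler_expR.
  have -> : u * (Dm + dl) + (u * dl + u * dl) = u * (Dm + 3 * dl) by ring.
  by rewrite [a * u]mulrC ler_pM2l.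
have e0 : 0 < e1 ^+ 2 by rewrite exprn_gt0 // expR_gt0.
have hB2 : B * e1 ^+ 2 < 2 * A%:R by apply: le_lt_trans hE.
have t2 : 8 * u * B / A%:R <= 16 / (u * dl ^+ 2).
  rewrite ler_pdivrMr // [X in _ <= X]mulrC mulrA ler_pdivlMr ?mulr_gt0 ?exprn_gt0 //.
  have B0 : 0 < B by rewrite expR_gt0.
  have f1 : B * (u * dl) ^+ 2 <= B * e1 ^+ 2 by rewrite ler_pM2l.
  have -> : 8 * u * B * (u * dl ^+ 2) = 8 * (B * (u * dl) ^+ 2) by ring.
  lra.
have t1 : V * u / (u * dl) ^+ 2 = V / (u * dl ^+ 2).
  by field; rewrite ?lt0r_neq0.
rewrite t1.
apply: le_trans (lerD (lexx _) t2) _.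
have -> : 9 * (V / (u * dl ^+ 2)) + 16 / (u * dl ^+ 2) = (9 * V + 16) / (u * dl ^+ 2).
  by field; rewrite lt0r_neq0 //= -/u lt0r_neq0.
rewrite ler_pdivrMr ?mulr_gt0 ?exprn_gt0 //.
lra.
Qed.

End Asym.
Section Fin.
Context {R : realType}.
Local Open Scope ereal_scope.

Lemma swap_series (I : eqType) (r : seq I) (f : I -> nat -> \bar R) : (forall i n, 0 <= f i n) ->
  \sum_(i <- r) \sum_(0 <= n <oo) f i n = \sum_(0 <= n <oo) \sum_(i <- r) f i n.
Proof. by move=> f0; rewrite nneseries_sum. Qed.

Lemma series_ge0 (f : nat -> \bar R) : (forall n, 0 <= f n) -> 0 <= \sum_(0 <= n <oo) f n.
Proof. by move=> f0; apply: nneseries_ge0 => n _ _; exact: f0. Qed.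

Lemma swap2 (I J : eqType) (r1 : seq I) (r2 : seq J) (f : I -> J -> nat -> \bar R) :
  (forall i j n, 0 <= f i j n) ->
  \sum_(i <- r1) \sum_(j <- r2) \sum_(0 <= n <oo) f i j n =
  \sum_(0 <= n <oo) \sum_(i <- r1) \sum_(j <- r2) f i j n.
Proof.
move=> f0; rewrite -swap_series; last by move=> i n; apply: sume_ge0 => j _.
by apply: eq_bigr => i _; rewrite swap_series.
Qed.

End Fin.

Section Mx.
Context {R : realType} {X : finType}.
Lemma bigmax_ub (F : X -> R) (r : seq X) x : x \in r -> F x <= \big[Num.max/0]_(i <- r) F i.
Proof.
elim: r => [//|a r IH]; rewrite in_cons big_cons => /orP[/eqP ->|h].
  by rewrite le_max lexx.
by rewrite le_max IH ?orbT.
Qed.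
Lemma bigmax_ge0 (F : X -> R) (r : seq X) : 0 <= \big[Num.max/0]_(i <- r) F i.
Proof. by elim: r => [|a r IH]; rewrite ?big_nil // big_cons le_max IH orbT. Qed.
Lemma bigmax_lt (F : X -> R) (r : seq X) (c : R) : 0 < c -> (forall x, F x < c) ->
  \big[Num.max/0]_(i <- r) F i < c.
Proof. by move=> c0 Fc; elim: r => [|a r IH]; rewrite ?big_nil // big_cons gt_max Fc IH. Qed.
End Mx.

Theorem proposition1 (R : realType) (X Y : finType) (Q : X -> Y -> R) (star : X)
  (HQ : stochastic Q)
  (Hcov : forall y : Y, exists x : X, 0 < Q x y)
  (Hcap : 0 < capacity Q)
  (Hstar : forall y : Y, 0 < Q star y)
  (Rt : R) (HRt : 0 <= Rt) (alpha : R)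
  (Halpha : (\big[maxe/-oo]_(x : X) divergence (Q x) (Q star) < alpha%:E)%E) :
  ~ achievable Q star alpha Rt.
Proof.
move=> Hach.
have [y0 _] : exists y : Y, true.
  case: (pickP (fun _ : Y => true)) => [y _|none]; first by exists y.
  have := (HQ star).2; rewrite big1 => [/eqP|u]; last by have := none u.
  by rewrite eq_sym oner_eq0.
pose dvf := dv R X Y Q star.
pose vvf := vv R X Y Q star.
have Ediv : forall x, divergence (Q x) (Q star) = (dvf x)%:E.
  move=> x; rewrite /divergence.
  case: existsP => [[y /andP[_ /eqP e]]|_].
    by move: (Hstar y); rewrite e ltxx.
  congr EFin; rewrite /dvf /dv [RHS](bigID (fun y => 0 < Q x y)) /= [X in _ = _ + X]big1 ?addr0 // => y.
  rewrite -leNgt => h; have -> : Q x y = 0 by apply/eqP; rewrite eq_le h Q_ge0.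
  by rewrite mul0r.
have hdv : forall x, dvf x < alpha.
  move=> x; rewrite -lte_fin -Ediv; apply: le_lt_trans Halpha.
  by rewrite (bigD1 x) //= le_max lexx.
have a0 : 0 < alpha by have := hdv star; rewrite /dvf dv_star.
pose Dm := \big[Num.max/0]_(x <- index_enum X) dvf x.
have hD : forall x, dvf x <= Dm by move=> x; apply: bigmax_ub; rewrite mem_index_enum.
have Dm0 : 0 <= Dm by apply: bigmax_ge0.
have Dma : Dm < alpha by apply: bigmax_lt.
pose V := \sum_(x : X) vvf x.
have vv0 : forall x, 0 <= vvf x.
  by move=> x; apply: sumr_ge0 => u _; rewrite mulr_ge0 ?sqr_ge0 ?Q_ge0.
have hV : forall x, vvf x <= V.
  by move=> x; rewrite /V (bigD1 x) //= lerDl sumr_ge0.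
have V0 : 0 <= V by apply: sumr_ge0.
pose dl := (alpha - Dm) / 4.
have dl0 : 0 < dl by rewrite /dl divr_gt0 // subr_gt0.
pose eps := Num.min dl (1 / 8).
have eps0 : 0 < eps by rewrite /eps lt_min dl0 /=; lra.
have epsd : eps <= dl by rewrite /eps ge_min lexx.
have eps8 : eps <= 1 / 8 by rewrite /eps ge_min lexx orbT.
pose N0 := (Num.truncn (8 * (9 * V + 16) / dl ^+ 2)).+1.
have := Hach eps eps0 N0; move=> [N [NN0 [M [C [M2 HC]]]]].
have [_ HP] := HC.
set A := async_level (alpha - eps) N in HP.
have A1 : (1 <= A)%N by rewrite /A /async_level leq_maxl.
have N1 : (1 <= N)%N by apply: leq_trans NN0.
have hN : 8 * (9 * V + 16) < N%:R * dl ^+ 2.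
  have := truncnS_gt (8 * (9 * V + 16) / dl ^+ 2).
  rewrite ltr_pdivrMr ?exprn_gt0 // => h; apply: lt_le_trans h _.
  by rewrite ler_pM2r ?exprn_gt0 // ler_nat.
have hE : expR ((alpha - eps) * N%:R) < 2 * A%:R.
  have := truncnS_gt (expR ((alpha - eps) * N%:R)).
  move=> h; apply: lt_le_trans h _.
  have h1 : (Num.truncn (expR ((alpha - eps) * N%:R)))%:R <= A%:R :> R.
    by rewrite ler_nat /A /async_level leq_maxr.
  have h2 : 1 <= A%:R :> R by rewrite (ler_nat R 1).
  rewrite -natr1; lra.
have e4 : 4 * dl = alpha - Dm by rewrite /dl; field.
have ha : Dm + 3 * dl <= alpha - eps by lra.
have cle := @asym R Dm (alpha - eps) dl V N A dl0 V0 ha N1 A1 hE hN.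
have MB : forall L, \sum_(m < M) \sum_(1 <= l < A.+1) \sum_(n < L.+1) p_correct Q star C m l n <=
    A%:R * M%:R * (3 / 4).
  move=> L; apply: (le_trans (@main_bound R X Y Q star HQ Hstar y0 M N C A L Dm dl V A1 M2 hD Dm0 dl0 N1 hV)).
  have AM : 0 <= A%:R * M%:R :> R by rewrite mulr_ge0.
  by rewrite ler_wpM2l //; rewrite /Bc; lra.
pose p m l n := p_correct Q star C m l n.
have p0 : forall m l n, 0 <= p m l n by move=> m l n; exact: p_correct_ge0.
have S0 : forall m l, (0 <= \sum_(0 <= n <oo) (p m l n)%:E)%E.
  by move=> m l; apply: series_ge0 => n; rewrite lee_fin.
have S1 : forall m l, (\sum_(0 <= n <oo) (p m l n)%:E <= 1%:E)%E.
  move=> m l; apply: nneseries_le_bound => [n|k]; first by rewrite lee_fin.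
  case: k => [|k]; first by rewrite big_geq.
  by rewrite sumEFin big_mkord lee_fin; exact: (@partial_le1 R X Y Q star HQ y0 M N C k m l).
pose s m l := fine (\sum_(0 <= n <oo) (p m l n)%:E)%E.
have Sfin : forall m l, (s m l)%:E = (\sum_(0 <= n <oo) (p m l n)%:E)%E.
  move=> m l; rewrite /s fineK // ge0_fin_numE ?S0 //.
  exact: le_lt_trans (S1 m l) (ltry 1).
have SsumE : (\sum_(m < M) \sum_(1 <= l < A.+1) \sum_(0 <= n <oo) (p m l n)%:E
    <= (A%:R * M%:R * (3 / 4))%:E)%E.
  rewrite swap2; last by move=> i j n; rewrite lee_fin.
  apply: nneseries_le_bound => [n|k].
    by apply: sume_ge0 => m _; apply: sume_ge0 => l _; rewrite lee_fin.
  case: k => [|k].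
    rewrite big_geq // lee_fin mulr_ge0 // mulr_ge0 //.
  under eq_bigr => n _ do under eq_bigr => m _ do rewrite sumEFin.
  under eq_bigr => n _ do rewrite sumEFin.
  rewrite sumEFin lee_fin big_mkord exchange_big /=.
  under eq_bigr => m _ do rewrite exchange_big /=.
  exact: MB.
have Ssum : \sum_(m < M) \sum_(1 <= l < A.+1) s m l <= A%:R * M%:R * (3 / 4).
  rewrite -lee_fin -sumEFin.
  under eq_bigr => m _ do rewrite -sumEFin.
  under eq_bigr => m _ do under eq_bigr => l _ do rewrite Sfin.
  exact: SsumE.
move: HP; rewrite /Perr /err_ml.
under eq_bigr => m _ do under eq_bigr => l _ do rewrite -Sfin -EFinB.
under eq_bigr => m _ do rewrite sumEFin.
rewrite sumEFin -EFinM lee_fin.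
have E1 : \sum_(m < M) \sum_(1 <= l < A.+1) (1 - s m l) =
    A%:R * M%:R - \sum_(m < M) \sum_(1 <= l < A.+1) s m l.
  under eq_bigr => m _ do rewrite sumrB sumr_const_nat subSS subn0.
  rewrite sumrB sumr_const card_ord; congr (_ - _).
  by rewrite -mulrnA natrM.
rewrite E1 natrM.
have P0 : 0 < A%:R * M%:R :> R by rewrite mulr_gt0 ?ltr0n // ltnW.
move: Ssum; move: (\sum_(m < M) \sum_(1 <= l < A.+1) s m l) => S Ssum.
have -> : (A%:R * M%:R)^-1 * (A%:R * M%:R - S) = 1 - S / (A%:R * M%:R).
  by rewrite mulrBr mulVf ?lt0r_neq0 // [_^-1 * S]mulrC.
have : S / (A%:R * M%:R) <= 3 / 4.
  by rewrite ler_pdivrMr // mulrC.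
move=> h2 h1; clear -h1 h2 eps8; lra.
Qed.
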